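(* Let $\mathcal F$ be a Banach function space compactly embedded in $C(\mathbf X)$. There exists a strategy for Predictor that produces predictions with $|\mu_n|\le1$ and guarantees, for all $N=1,2,\dots$, all $F\in\mathcal F$ and all moves of Reality, $$\sum_{n=1}^N(y_n-\mu_n)^2\le\sum_{n=1}^N(y_n-F(x_n))^2+C\inf_{\epsilon\in(0,1/2]}\left(\mathcal H_{\epsilon/\phi}(U_{\mathcal F})+\log\log\frac1\epsilon+\log\log\phi+\epsilon N+1\right),$$ where $C$ is a universal constant and $\phi:=2\max(1,\|F\|_{\mathcal F})$.
   Context: Protocol: $\mathbf X$ is a nonempty topological space. At each round $n=1,2,\dots$ Reality announces $x_n\in\mathbf X$, Predictor announces $\mu_n\in\mathbb R$, Reality announces $y_n\in[-1,1]$; a strategy for Predictor maps each history $(x_1,y_1,\dots,x_{n-1},y_{n-1},x_n)$ to $\mu_n$, and guarantees must hold for all (possibly adaptive) moves of Reality. $C(\mathbf X)$ is the space of bounded continuous real-valued functions on $\mathbf X$ with the supremum norm. A Banach function space compactly embedded in $C(\mathbf X)$ is a linear subspace $\mathcal F\subseteq C(\mathbf X)$ equipped with a norm $\|\cdot\|_{\mathcal F}$ making it a Banach space, such that its unit ball $U_{\mathcal F}=\{F\in\mathcal F:\|F\|_{\mathcal F}\le1\}$ is a compact subset of $C(\mathbf X)$. For a totally bounded subset $A$ of $C(\mathbf X)$, $\mathcal H_\epsilon(A)$ is $\log_2$ of the minimal number of points of $A$ forming an $\epsilon$-net for $A$ in the supremum metric. $\log=\log_2$. *)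

(* Defs.v *)
From HB Require Import structures.
From mathcomp Require Import all_boot all_order all_algebra.
From mathcomp Require Import all_classical all_reals all_analysis.
From mathcomp Require Import Rstruct Rstruct_topology.
Set Implicit Arguments. Unset Strict Implicit. Unset Printing Implicit Defensive.
Import Order.TTheory GRing.Theory Num.Theory.
Import numFieldNormedType.Exports.
Local Open Scope classical_set_scope.
Local Open Scope ring_scope.

Notation R := Rdefinitions.R.

Definition log2 (x : R) : R := ln x / ln 2.

Definition bcont (X : topologicalType) (f : X -> R) : Prop :=
  continuous f /\ exists M : R, forall x, `|f x| <= M.

(* (Fs, nF) is a Banach function space compactly embedded in C(X):
   Fs is a linear subspace of C(X), nF is a norm on Fs, (Fs, nF) is complete,
   and the closed unit ball is compact in C(X) (sup-norm = uniform topology). *)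
Definition banach_compact_emb (X : topologicalType)
    (Fs : set (X -> R)) (nF : (X -> R) -> R) : Prop :=
  [/\ (forall f, Fs f -> bcont f),
      Fs (fun _ => 0) /\
      (forall f g, Fs f -> Fs g -> Fs (fun x => f x + g x)) /\
      (forall (a : R) f, Fs f -> Fs (fun x => a * f x)),
      (forall f, Fs f -> nF f = 0 -> f = (fun _ => 0)) /\
      (forall (a : R) f, Fs f -> nF (fun x => a * f x) = `|a| * nF f) /\
      (forall f g, Fs f -> Fs g -> nF (fun x => f x + g x) <= nF f + nF g),
      (forall u : nat -> (X -> R), (forall k, Fs (u k)) ->
         (forall e : R, 0 < e -> exists K : nat, forall m n : nat,
             (K <= m)%N -> (K <= n)%N -> nF (fun x => u m x - u n x) <= e) ->
         exists f, Fs f /\ forall e : R, 0 < e -> exists K : nat, forall n : nat,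
             (K <= n)%N -> nF (fun x => u n x - f x) <= e) &
      compact ([set f | Fs f /\ nF f <= 1] : set {uniform X -> R})].

Definition net_sizes (X : Type) (eps : R) (A : set (X -> R)) : set nat :=
  [set n | exists g : nat -> (X -> R),
     (forall i, (i < n)%N -> A (g i)) /\
     forall f, A f -> exists i, (i < n)%N /\ forall x, `|f x - g i x| <= eps].

Definition entropy (X : Type) (eps : R) (A : set (X -> R)) : R :=
  log2 (inf [set (n%:R : R) | n in net_sizes eps A]).

(* Predictor's strategy: history (x_1,y_1,...,x_{n-1},y_{n-1}) and x_n |-> mu_n *)
Definition strategy (X : Type) := seq (X * R) -> X -> R.

(* prediction at round n (n >= 1), for Reality's moves x, y indexed from 1 *)
Definition pred_at (X : Type) (S : strategy X) (x : nat -> X) (y : nat -> R)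
    (n : nat) : R :=
  S [seq (x i, y i) | i <- iota 1 n.-1] (x n).

(* Main.v *)
Require Import Defs.
From HB Require Import structures.
From mathcomp Require Import all_boot all_order all_algebra.
From mathcomp Require Import all_classical all_reals all_analysis.
From mathcomp Require Import Rstruct Rstruct_topology.
From mathcomp Require Import ring lra.
Import Order.TTheory GRing.Theory Num.Theory.
Import numFieldNormedType.Exports.
Local Open Scope classical_set_scope.
Local Open Scope ring_scope.

HB.instance Definition _ (X : topologicalType) := Pointed.copy {uniform X -> R} (X -> R).

Lemma net_exists (X : topologicalType) (A : set (X -> R)) (e : R) : 0 < e ->
  compact (A : set {uniform X -> R}) -> exists n, net_sizes e A n.
Proof.
move=> e0 cA0; have cA : cover_compact (A : set {uniform X -> R}) by have := @compact_cover {uniform X -> R}; move=> <-.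
have := cA {uniform X -> R} A (fun g => interior [set h : {uniform X -> R} | forall y, `|g y - h y| < e]).
case.
- by move=> i _; exact: open_interior.
- move=> g Ag; exists g => //.
  rewrite /interior /=; apply/uniform_nbhs.
  exists [set xy : R * R | ball xy.1 (PosNum e0)%:num xy.2]; split; first by exists e.
  move=> h /= H y; have := H y. by apply.
move=> D' sub cov.
pose s : seq {uniform X -> R} := finmap.enum_fset D'.
exists (size s), (fun i => nth (fun _ => 0 : R) s i : X -> R); split.
- move=> i ilt; have := sub (nth (fun _ => 0 : R) s i). by move=> /(_ (mem_nth _ ilt)) /set_mem.
- move=> f /cov [g /= gD fg].
  exists (index g s); split; first by rewrite index_mem.
  rewrite nth_index //.
  move=> x; move: fg => /nbhs_singleton /= /(_ x); rewrite distrC; exact: ltW.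
Qed.

Definition eta : R := 64^-1.
Definition act (t j k : nat) : bool := (j < 2 ^ t)%N && (k < 2 ^ t)%N.
Definition Usum (n : nat -> nat -> nat) (t : nat) (f : nat -> nat -> nat -> R) : R :=
  \sum_(0 <= j < 2 ^ t) \sum_(0 <= k < 2 ^ t) \sum_(0 <= i < n j k) f j k i.
Definition pri (n : nat -> nat -> nat) (j k i : nat) : R :=
  ((n j k * ((j.+1 * j.+2) * (k.+1 * k.+2)))%N%:R)^-1.


Lemma tangent (y z m : R) : -1 <= y <= 1 -> -1 <= z <= 1 -> -1 <= m <= 1 ->
  expR (- (eta * (y - z) ^+ 2)) <=
  expR (- (eta * (y - m) ^+ 2)) + 2 * eta * (y - m) * expR (- (eta * (y - m) ^+ 2)) * (z - m).
Proof.
move=> /andP[y1 y2] /andP[z1 z2] /andP[m1 m2].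
have he : eta = 64^-1 by [].
have he0 : 0 < eta by rewrite he.
set b := y - m; set d := z - m; set u := 2 * eta * b * d.
have hbd : -4 <= b * d <= 4 by rewrite /b /d; apply/andP; split; nra.
have hu1 : u <= 1/8 by rewrite /u he; lra.
have hu2 : -1/8 <= u by rewrite /u he; lra.
have hd2 : d ^+ 2 <= 4 by rewrite /d; nra.
have hu3 : u ^+ 2 <= 16 * eta ^+ 2 * d ^+ 2.
  rewrite /u; have hb2 : b ^+ 2 <= 4 by rewrite /b; nra.
  have : 0 <= d ^+ 2 by rewrite sqr_ge0.
  have : 0 <= eta ^+ 2 by rewrite sqr_ge0.
  rewrite !expr2; nra.
have -> : - (eta * (y - z) ^+ 2) = - (eta * b ^+ 2) + u + - (eta * d ^+ 2).
  by rewrite /u /b /d; ring.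
rewrite !exp.expRD.
set Eb := expR (- (eta * b ^+ 2)).
have Eb0 : 0 < Eb by exact: expR_gt0.
have h1 := expR_ge1Dx (- u).
have h2 := expRxMexpNx_1 u.
have h3 := expR_ge1Dx (eta * d ^+ 2).
have h4 := expRxMexpNx_1 (eta * d ^+ 2).
have h5 := expR_gt0 u.
have h6 := expR_gt0 (- (eta * d ^+ 2)).
have hEu1 : expR u * (1 - u) <= 1.
  rewrite -h2; apply: ler_wpM2l; [exact: ltW | lra].
have hq : 1 <= (1 - u) * ((1 + u) * (1 + eta * d ^+ 2)).
  have : 0 <= d ^+ 2 by rewrite sqr_ge0.
  rewrite he in hu3 *; nra.
have hEu2 : expR u <= (1 + u) * (1 + eta * d ^+ 2).
  have : 0 < 1 - u by lra.
  nra.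
have hEu3 : expR u <= (1 + u) * expR (eta * d ^+ 2).
  apply: (le_trans hEu2); apply: ler_wpM2l; lra.
have hEu4 : expR u * expR (- (eta * d ^+ 2)) <= 1 + u.
  have := ler_wpM2r (ltW h6) hEu3.
  by rewrite -mulrA h4 mulr1.
rewrite -mulrA.
have : Eb * (expR u * expR (- (eta * d ^+ 2))) <= Eb * (1 + u) by apply: ler_wpM2l => //; exact: ltW.
suff -> : Eb + 2 * eta * b * Eb * d = Eb * (1 + u) by [].
by rewrite /u; ring.
Qed.

Section Usum_lemmas.
Variables (n : nat -> nat -> nat) (t : nat).
Lemma Usum_le f g : (forall j k i, f j k i <= g j k i) -> Usum n t f <= Usum n t g.
Proof. by move=> H; apply: ler_sum => j _; apply: ler_sum => k _; apply: ler_sum => i _. Qed.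
Lemma Usum_ext f g : (forall j k i, f j k i = g j k i) -> Usum n t f = Usum n t g.
Proof. by move=> H; apply: eq_bigr => j _; apply: eq_bigr => k _; apply: eq_bigr => i _. Qed.
Lemma Usum_add f g : Usum n t (fun j k i => f j k i + g j k i) = Usum n t f + Usum n t g.
Proof.
rewrite /Usum -big_split; apply: eq_bigr => j _; rewrite -big_split.
by apply: eq_bigr => k _; rewrite -big_split.
Qed.
Lemma Usum_scal c f : Usum n t (fun j k i => c * f j k i) = c * Usum n t f.
Proof.
rewrite /Usum mulr_sumr; apply: eq_bigr => j _; rewrite mulr_sumr.
by apply: eq_bigr => k _; rewrite mulr_sumr.
Qed.
Lemma Usum_ge0 f : (forall j k i, 0 <= f j k i) -> 0 <= Usum n t f.
Proof. by move=> H; apply: sumr_ge0 => j _; apply: sumr_ge0 => k _; apply: sumr_ge0 => i _. Qed.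
Lemma Usum_opp f : Usum n t (fun j k i => - f j k i) = - Usum n t f.
Proof. by rewrite -mulN1r -Usum_scal; apply: Usum_ext => *; rewrite mulN1r. Qed.

Lemma Usum_ratio v q : (forall j k i, 0 <= v j k i) -> (forall j k i, `|q j k i| <= 1) ->
  `|Usum n t (fun j k i => v j k i * q j k i)| <= Usum n t v /\
  `|Usum n t (fun j k i => v j k i * q j k i) / Usum n t v| <= 1.
Proof.
move=> hv hq; set A := Usum _ _ _; set V := Usum _ _ _.
have V0 : 0 <= V by apply: Usum_ge0.
have hA : `|A| <= V.
  rewrite ler_norml; apply/andP; split.
  - rewrite -Usum_opp; apply: Usum_le => j k i.
    have := hq j k i; have := hv j k i; rewrite ler_norml => w /andP[h1 h2]; nra.
  - apply: Usum_le => j k i.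
    have := hq j k i; have := hv j k i; rewrite ler_norml => w /andP[h1 h2]; nra.
split => //.
have [->|Vn0] := eqVneq V 0; first by rewrite invr0 mulr0 normr0.
have Vp : 0 < V by rewrite lt_def Vn0 V0.
by rewrite normrM normfV (gtr0_norm Vp) ler_pdivrMr // mul1r.
Qed.

Lemma Usum_mix v q y : (forall j k i, 0 <= v j k i) -> (forall j k i, `|q j k i| <= 1) ->
  -1 <= y <= 1 ->
  Usum n t (fun j k i => v j k i * expR (- (eta * (y - q j k i) ^+ 2))) <=
  Usum n t v * expR (- (eta * (y - Usum n t (fun j k i => v j k i * q j k i) / Usum n t v) ^+ 2)).
Proof.
move=> hv hq hy; have [hA hm] := @Usum_ratio v q hv hq.
set A := Usum n t (fun j k i => v j k i * q j k i) in hA hm *.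
set V := Usum n t v in hA hm *.
set mm := A / V in hm *.
set Eb := expR (- (eta * (y - mm) ^+ 2)).
set c := 2 * eta * (y - mm) * Eb.
have hmm : -1 <= mm <= 1 by rewrite -ler_norml.
have step : Usum n t (fun j k i => v j k i * expR (- (eta * (y - q j k i) ^+ 2))) <=
    Usum n t (fun j k i => Eb * v j k i + (c * (v j k i * q j k i) + (- (c * mm)) * v j k i)).
  apply: Usum_le => j k i.
  have hqi : -1 <= q j k i <= 1 by rewrite -ler_norml.
  have := @tangent _ _ _ hy hqi hmm; rewrite -/Eb -/c => ht.
  have := ler_wpM2l (hv j k i) ht.
  move=> h; apply: (le_trans h); rewrite le_eqVlt; apply/orP; left; apply/eqP; ring.
apply: (le_trans step); rewrite !Usum_add !Usum_scal -/A -/V.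
have -> : A = mm * V.
  have [V0|Vn0] := eqVneq V 0.
    by rewrite /mm V0 mulr0; apply/normr0_eq0/eqP; rewrite eq_le normr_ge0 andbT -V0.
  by rewrite /mm mulfVK.
rewrite le_eqVlt; apply/orP; left; apply/eqP; ring.
Qed.
End Usum_lemmas.


Lemma sum_restrict (M m : nat) (H : nat -> R) : (m <= M)%N ->
  \sum_(0 <= j < M) (if (j < m)%N then H j else 0) = \sum_(0 <= j < m) H j.
Proof.
move=> le; rewrite (big_cat_nat (n:=m)) //=.
have -> : \sum_(m <= j < M) (if (j < m)%N then H j else 0) = 0.
  rewrite big_nat_cond big1 // => j /andP[/andP[hj _] _]; by rewrite ltnNge hj.
by rewrite addr0; apply: eq_big_nat => j /andP[_ ->].
Qed.

Lemma Usum_restrict n t T f : (t <= T)%N ->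
  Usum n T (fun j k i => if act t j k then f j k i else 0) = Usum n t f.
Proof.
move=> le; have h2 : (2 ^ t <= 2 ^ T)%N by rewrite leq_exp2l.
rewrite /Usum.
transitivity (\sum_(0 <= j < 2 ^ T)
   (if (j < 2 ^ t)%N then \sum_(0 <= k < 2 ^ t) \sum_(0 <= i < n j k) f j k i else 0)).
  apply: eq_bigr => j _; case: (ltnP j (2 ^ t)) => hj.
    rewrite -(@sum_restrict _ _ _ h2); apply: eq_bigr => k _; rewrite /act hj /=.
    by case: ifP => _ //; rewrite big1.
  apply: big1 => k _; rewrite /act ltnNge hj /= big1 //.
exact: sum_restrict.
Qed.


Lemma sum_ge_term (M j0 : nat) (F : nat -> R) : (forall j, 0 <= F j) -> (j0 < M)%N ->
  F j0 <= \sum_(0 <= j < M) F j.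
Proof.
move=> F0 hj; rewrite (bigD1_seq j0) /= ?mem_index_iota ?iota_uniq //.
by rewrite lerDl; apply: sumr_ge0 => *.
Qed.

Lemma Usum_ge_term n T f j k i : (forall j k i, 0 <= f j k i) ->
  (j < 2 ^ T)%N -> (k < 2 ^ T)%N -> (i < n j k)%N -> f j k i <= Usum n T f.
Proof.
move=> f0 hj hk hi; rewrite /Usum.
have G0 : forall j', 0 <= \sum_(0 <= k' < 2 ^ T) \sum_(0 <= i' < n j' k') f j' k' i'.
  by move=> j'; apply: sumr_ge0 => k' _; apply: sumr_ge0 => *.
apply: (le_trans _ (@sum_ge_term _ _ _ G0 hj)).
have K0 : forall k', 0 <= \sum_(0 <= i' < n j k') f j k' i'.
  by move=> k'; apply: sumr_ge0 => *.
apply: (le_trans _ (@sum_ge_term _ _ _ K0 hk)).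
exact: (@sum_ge_term _ _ (fun i' => f j k i')).
Qed.

Lemma sum_p_le1 M : \sum_(0 <= j < M) ((j.+1)%:R * (j.+2)%:R : R)^-1 <= 1.
Proof.
suff -> : \sum_(0 <= j < M) ((j.+1)%:R * (j.+2)%:R : R)^-1 = 1 - (M.+1%:R)^-1.
  by rewrite lerBlDr lerDl invr_ge0 ler0n.
elim: M => [|M IH]; first by rewrite big_geq // invr1 subrr.
rewrite big_nat_recr //= IH.
have h1 : (M.+1%:R : R) != 0 by rewrite pnatr_eq0.
have h2 : (M.+2%:R : R) != 0 by rewrite pnatr_eq0.
have e : (M.+2%:R : R) = M.+1%:R + 1 by rewrite -addn1 natrD.
rewrite e in h2 *.
field; have hM : (0:R) <= M%:R by rewrite ler0n.
by apply/andP; split; apply/negP => /eqP; lra.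
Qed.

Lemma mass_le1 n T : Usum n T (pri n) <= 1.
Proof.
set p := fun j : nat => ((j.+1)%:R * (j.+2)%:R : R)^-1.
have p0 : forall j, 0 <= p j by move=> j; rewrite /p invr_ge0 mulr_ge0 ?ler0n.
apply: (@le_trans _ _ (\sum_(0 <= j < 2 ^ T) \sum_(0 <= k < 2 ^ T) p j * p k)).
  apply: ler_sum => j _; apply: ler_sum => k _.
  rewrite sumr_const_nat subn0 /pri.
  case: (posnP (n j k)) => [->|hn]; first by rewrite mulr0n mulr_ge0.
  rewrite -mulr_natl !natrM.
  have hn' : (n j k)%:R != 0 :> R by rewrite pnatr_eq0 -lt0n.
  have a1 : (j.+1%:R : R) != 0 by rewrite pnatr_eq0.
  have a2 : (j.+2%:R : R) != 0 by rewrite pnatr_eq0.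
  have a3 : (k.+1%:R : R) != 0 by rewrite pnatr_eq0.
  have a4 : (k.+2%:R : R) != 0 by rewrite pnatr_eq0.
  rewrite le_eqVlt; apply/orP; left; apply/eqP; rewrite /p; field.
  have hj0 : (0:R) <= j%:R by rewrite ler0n.
  have hk0 : (0:R) <= k%:R by rewrite ler0n.
  by rewrite hn' andbT; apply/and4P; split; apply/negP => /eqP; lra.
under eq_bigr do rewrite -mulr_sumr.
rewrite -mulr_suml.
have h1 := sum_p_le1 (2 ^ T); rewrite -/p in h1 *.
apply: (le_trans (ler_wpM2l _ h1)); last by rewrite mulr1.
by apply: sumr_ge0 => *.
Qed.

Section Alg.
Variables (X : Type) (nsz : nat -> nat -> nat) (pe : nat -> nat -> nat -> X -> R).
Variables (xs : nat -> X) (ys : nat -> R).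

Definition ell (m : nat -> R) s j k i : R :=
  if act s j k then (ys s - pe j k i (xs s)) ^+ 2 else (ys s - m s) ^+ 2.
Definition Lsl (m : nat -> R) t j k i : R := \sum_(1 <= s < t) ell m s j k i.
Definition wt (m : nat -> R) t j k i : R := pri nsz j k i * expR (- (eta * Lsl m t j k i)).
Definition muf (m : nat -> R) t : R :=
  Usum nsz t (fun j k i => wt m t j k i * pe j k i (xs t)) / Usum nsz t (wt m t).
Fixpoint mup (t : nat) : nat -> R :=
  match t with
  | 0 => fun _ => 0
  | t'.+1 => fun s => if s == t'.+1 then muf (mup t') t'.+1 else mup t' s
  end.
Definition mu s := mup s s.

Lemma muf_ext m m' t : (forall s, (1 <= s < t)%N -> m s = m' s) -> muf m t = muf m' t.
Proof.
move=> H.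
have E : forall j k i, Lsl m t j k i = Lsl m' t j k i.
  by move=> j k i; apply: eq_big_nat => s /H; rewrite /ell => ->.
by rewrite /muf /wt; congr (_ / _); apply: Usum_ext => j k i; rewrite E.
Qed.

Lemma mup_stable T s : (s <= T)%N -> mup T s = mu s.
Proof.
elim: T s => [|T IH] s hs.
  by move: hs; rewrite leqn0 => /eqP ->.
rewrite /=; case: eqP => [->|ne]; first by rewrite /mu /= eqxx.
by apply: IH; rewrite leq_eqVlt (negbTE (introN eqP ne)) /= ltnS in hs.
Qed.

Lemma mu_eq t : (1 <= t)%N -> mu t = muf mu t.
Proof.
case: t => // t _; rewrite /mu /= eqxx; apply: muf_ext => s /andP [_ hs].
by apply: mup_stable; rewrite -ltnS.
Qed.

Hypothesis pe_bd : forall j k i x, `|pe j k i x| <= 1.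
Hypothesis ys_bd : forall s, -1 <= ys s <= 1.

Lemma pri_ge0 j k i : 0 <= pri nsz j k i.
Proof. by rewrite /pri invr_ge0 ler0n. Qed.

Lemma wt_ge0 m t j k i : 0 <= wt m t j k i.
Proof. by rewrite /wt mulr_ge0 ?pri_ge0 ?expR_ge0. Qed.

Lemma muf_bd m t : `|muf m t| <= 1.
Proof. by have [_ ->] := @Usum_ratio nsz t (wt m t) (fun j k i => pe j k i (xs t)) (wt_ge0 m t) (fun j k i => pe_bd j k i (xs t)). Qed.

Lemma mu_bd t : `|mu t| <= 1.
Proof. by case: t => [|t]; [rewrite /mu /= normr0 | rewrite mu_eq // muf_bd]. Qed.

Definition Lstar t : R := \sum_(1 <= s < t) (ys s - mu s) ^+ 2.

Lemma potential t T : (t <= T)%N ->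
  Usum nsz T (wt mu t.+1) <= Usum nsz T (pri nsz) * expR (- (eta * Lstar t.+1)).
Proof.
elim: t => [|t IH] hT.
  rewrite /Lstar big_geq // mulr0 oppr0 exp.expR0 mulr1.
  rewrite le_eqVlt; apply/orP; left; apply/eqP; apply: Usum_ext => j k i.
  by rewrite /wt /Lsl big_geq // mulr0 oppr0 exp.expR0 mulr1.
set g := fun z => expR (- (eta * (ys t.+1 - z) ^+ 2)).
have hw : forall j k i, wt mu t.+2 j k i =
    (if act t.+1 j k then wt mu t.+1 j k i * g (pe j k i (xs t.+1)) else 0) +
    (if act t.+1 j k then 0 else wt mu t.+1 j k i * g (mu t.+1)).
  move=> j k i; rewrite /wt /Lsl big_nat_recr //= mulrDr opprD exp.expRD mulrA.
  by rewrite /ell /g; case: ifP => _; rewrite ?addr0 ?add0r.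
rewrite (@Usum_ext _ _ _ _ hw) Usum_add Usum_restrict //.
have hmix := @Usum_mix nsz t.+1 (wt mu t.+1) (fun j k i => pe j k i (xs t.+1)) (ys t.+1)
  (wt_ge0 mu t.+1) (fun j k i => pe_bd j k i (xs t.+1)) (ys_bd t.+1).
rewrite -/(muf mu t.+1) -mu_eq // in hmix.
apply: (le_trans (lerD hmix (lexx _))).
rewrite -(@Usum_restrict nsz t.+1 T (fun j k i => wt mu t.+1 j k i) hT).
rewrite mulrC -Usum_scal -Usum_add.
rewrite (@Usum_ext _ _ _ (fun j k i => g (mu t.+1) * wt mu t.+1 j k i)); last first.
  by move=> j k i; rewrite /g; case: ifP => _; rewrite ?mulr0 ?addr0 ?add0r // mulrC.
rewrite Usum_scal mulrC.
have g0 : 0 <= g (mu t.+1) by rewrite /g expR_ge0.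
apply: (le_trans (ler_wpM2r g0 (IH (ltnW hT)))).
rewrite -mulrA; apply: ler_wpM2l; first by apply: Usum_ge0 => *; exact: pri_ge0.
rewrite /g -exp.expRD /Lstar (big_nat_recr t.+1) //= mulrDr opprD.
by [].
Qed.


Lemma Lstar_le N : Lstar N.+1 <= 4 * N%:R.
Proof.
rewrite /Lstar; apply: (@le_trans _ _ (\sum_(1 <= s < N.+1) (4:R))).
  apply: ler_sum => s _; have := ys_bd s; have := mu_bd s.
  rewrite ler_norml => /andP[h1 h2] /andP[h3 h4]; nra.
by rewrite sumr_const_nat subSS subn0 mulr_natr.
Qed.

Lemma inact_le W j k N : (j < 2 ^ W)%N -> (k < 2 ^ W)%N ->
  \sum_(1 <= s < N.+1) (if act s j k then 0 else 4 : R) <= 4 * W%:R.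
Proof.
move=> hj hk.
have actW : forall s, (W <= s)%N -> act s j k.
  move=> s hs; have h2 : (2 ^ W <= 2 ^ s)%N by rewrite leq_exp2l.
  by rewrite /act (leq_trans hj h2) (leq_trans hk h2).
suff : \sum_(1 <= s < N.+1) (if act s j k then 0 else 4 : R) <= 4 * (minn N W)%:R.
  move=> h; apply: (le_trans h); rewrite ler_wpM2l // ler_nat; exact: geq_minr.
elim: N => [|N IH]; first by rewrite big_geq // mulr0.
rewrite big_nat_recr //=.
case: (leqP W N) => hW.
  rewrite actW ?(leq_trans hW) // addr0.
  have -> : minn N.+1 W = minn N W.
    by rewrite (minn_idPr (leq_trans hW (leqnSn N))) (minn_idPr hW).
  exact: IH.
have -> : minn N.+1 W = N.+1 by apply/minn_idPl.
have e : minn N W = N by apply/minn_idPl; exact: ltnW.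
rewrite e in IH.
have ht : (if act N.+1 j k then 0 else 4 : R) <= 4 by case: ifP => _; lra.
have := lerD IH ht; move=> h; apply: (le_trans h).
by rewrite -addn1 natrD; lra.
Qed.

Lemma regret N j k i W : (i < nsz j k)%N -> (j < 2 ^ W)%N -> (k < 2 ^ W)%N ->
  Lstar N.+1 <= \sum_(1 <= s < N.+1) (ys s - pe j k i (xs s)) ^+ 2 + 4 * W%:R
     + 64 * ln ((nsz j k * ((j.+1 * j.+2) * (k.+1 * k.+2)))%N%:R).
Proof.
move=> hi hj hk.
set Q := (nsz j k * ((j.+1 * j.+2) * (k.+1 * k.+2)))%N.
have Q1 : (1 <= Q)%N by rewrite /Q !muln_gt0 (leq_ltn_trans (leq0n i) hi).
have lnQ : 0 <= ln (Q%:R : R) by apply: ln_ge0; rewrite ler1n.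
have loss0 : 0 <= \sum_(1 <= s < N.+1) (ys s - pe j k i (xs s)) ^+ 2.
  by apply: sumr_ge0 => *; exact: sqr_ge0.
have hW := @inact_le W j k N hj hk.
have hLe : Lsl mu N.+1 j k i <= \sum_(1 <= s < N.+1) (ys s - pe j k i (xs s)) ^+ 2 + 4 * W%:R.
  apply: (le_trans _ (lerD (lexx _) hW)); rewrite -big_split /=.
  apply: ler_sum => s _; rewrite /ell; case: ifP => _; first by rewrite addr0.
  have := ys_bd s; have := mu_bd s; have := pe_bd j k i (xs s).
  rewrite !ler_norml => /andP[h1 h2] /andP[h3 h4] /andP[h5 h6].
  have := sqr_ge0 (ys s - pe j k i (xs s)); rewrite !expr2 => hq; nra.
case hact : (act N j k); last first.
  have hNW : (N < W)%N.
    rewrite ltnNge; apply/negP => hWN; move: hact; rewrite /act.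
    have h2 : (2 ^ W <= 2 ^ N)%N by rewrite leq_exp2l.
    by rewrite (leq_trans hj h2) (leq_trans hk h2).
  apply: (le_trans (Lstar_le N)).
  have : (N%:R : R) <= W%:R by rewrite ler_nat; apply: ltnW.
  lra.
move: hact; rewrite /act => /andP[hjN hkN].
have hpot := @potential N N (leqnn N).
have hm := mass_le1 nsz N.
have Eb0 : 0 < expR (- (eta * Lstar N.+1)) by exact: expR_gt0.
have hterm : wt mu N.+1 j k i <= expR (- (eta * Lstar N.+1)).
  apply: (le_trans (@Usum_ge_term nsz N (wt mu N.+1) j k i (fun j k i => wt_ge0 mu N.+1 j k i) hjN hkN hi)).
  apply: (le_trans hpot); rewrite -[X in _ <= X]mul1r.
  by apply: ler_wpM2r => //; exact: ltW.
have Qp : (0 : R) < Q%:R by rewrite ltr0n.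
have hpri : pri nsz j k i = (Q%:R)^-1 by [].
move: hterm; rewrite /wt hpri -ler_ln ?posrE ?mulr_gt0 ?invr_gt0 ?expR_gt0 //.
rewrite lnM ?posrE ?invr_gt0 ?expR_gt0 // lnV ?posrE // !expRK.
move=> h.
have he : eta = 64^-1 by [].
rewrite he in h.
lra.
Qed.

End Alg.

Lemma muf_ext2 (X : Type) nsz pe (xs xs' : nat -> X) (ys ys' : nat -> R) (m m' : nat -> R) t :
  (forall s, (1 <= s < t)%N -> [/\ xs s = xs' s, ys s = ys' s & m s = m' s]) ->
  xs t = xs' t -> muf X nsz pe xs ys m t = muf X nsz pe xs' ys' m' t.
Proof.
move=> H ht.
have hL : forall j k i, Lsl X pe xs ys m t j k i = Lsl X pe xs' ys' m' t j k i.
  move=> j k i; rewrite /Lsl; apply: eq_big_nat => s hs; rewrite /ell.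
  by case: (H s hs) => -> -> ->.
rewrite /muf /wt ht.
by congr (_ / _); apply: Usum_ext => j k i; rewrite hL.
Qed.

Lemma mu_ext (X : Type) nsz pe (xs xs' : nat -> X) (ys ys' : nat -> R) n :
  (forall i, (1 <= i <= n)%N -> xs i = xs' i) ->
  (forall i, (1 <= i < n)%N -> ys i = ys' i) ->
  mu X nsz pe xs ys n = mu X nsz pe xs' ys' n.
Proof.
elim/ltn_ind: n => n IH hx hy.
case: n IH hx hy => [|n] IH hx hy; first by [].
rewrite (mu_eq X nsz pe xs ys n.+1 (ltn0Sn n)) (mu_eq X nsz pe xs' ys' n.+1 (ltn0Sn n)).
apply: muf_ext2; last by apply: hx; rewrite leqnn.
move=> s /andP[h1 h2]; split.
- by apply: hx; rewrite h1 /=; apply: ltnW.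
- by apply: hy; rewrite h1 h2.
- apply: (IH s h2).
    by move=> i' /andP[i1 i2]; apply: hx; rewrite i1 (leq_trans i2 (ltnW h2)).
  by move=> i' /andP[i1 i2]; apply: hy; rewrite i1 (ltn_trans i2 h2).
Qed.

Definition strat (X : Type) (x0 : X) nsz pe : strategy X := fun h z =>
  mu X nsz pe (fun i => if i == (size h).+1 then z else (nth (x0, 0) h i.-1).1)
    (fun i => (nth (x0, 0) h i.-1).2) (size h).+1.

Lemma pred_atE (X : Type) (x0 : X) nsz pe x y n : (1 <= n)%N ->
  pred_at (strat X x0 nsz pe) x y n = mu X nsz pe x y n.
Proof.
case: n => // n _; rewrite /pred_at /strat size_map size_iota /=.
apply: mu_ext => i /andP[i1 i2].
  case: eqP => [->//|ne].
  have hi : (i.-1 < n)%N by case: i i1 i2 ne => // i _ /=; rewrite ltnS leq_eqVlt => /orP[/eqP->|].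
  by rewrite (nth_map 0) ?size_iota // nth_iota // add1n prednK.
have hi : (i.-1 < n)%N by case: i i1 i2.
by rewrite (nth_map 0) ?size_iota // nth_iota // add1n prednK.
Qed.

Definition clip (z : R) : R := if z < -1 then -1 else if 1 < z then 1 else z.
Lemma clip_bd z : `|clip z| <= 1.
Proof.
rewrite /clip ler_norml; case: ltrP => h1; first lra.
case: ltrP => h2; lra.
Qed.

Lemma clip_aux (y c f r : R) : -1 <= y <= 1 -> -1 <= c <= 1 -> (f - c) * (y - c) <= 2 * r ->
  (y - c) ^+ 2 <= (y - f) ^+ 2 + 4 * r.
Proof.
move=> _ _ h.
have -> : (y - c) ^+ 2 = (y - f) ^+ 2 + 2 * ((f - c) * (y - c)) - (f - c) ^+ 2 by ring.
have := sqr_ge0 (f - c); lra.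
Qed.

Lemma clip_loss (y z f r : R) : -1 <= y <= 1 -> `|z - f| <= r ->
  (y - clip z) ^+ 2 <= (y - f) ^+ 2 + 4 * r.
Proof.
move=> hy; rewrite ler_norml => /andP[h1 h2].
move: (hy) => /andP[y1 y2].
rewrite /clip; case: ltrP => c1; [|case: ltrP => c2].
- apply: clip_aux => //; first by lra.
  case: (lerP f (-1)) => hf.
    have : 0 <= y - -1 by lra.
    have : f - -1 <= 0 by lra.
    nra.
  have : 0 <= y - -1 <= 2 by apply/andP; split; lra.
  have : 0 < f - -1 <= r by apply/andP; split; lra.
  move=> /andP[a1 a2] /andP[b1 b2]; nra.
- apply: clip_aux => //; first by lra.
  case: (lerP 1 f) => hf.
    have : y - 1 <= 0 by lra.
    have : 0 <= f - 1 by lra.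
    nra.
  have : -2 <= y - 1 <= 0 by apply/andP; split; lra.
  have : - r <= f - 1 < 0 by apply/andP; split; lra.
  move=> /andP[a1 a2] /andP[b1 b2]; nra.
- apply: clip_aux => //; first by apply/andP; split; lra.
  have : -2 <= y - z <= 2 by apply/andP; split; lra.
  have : - r <= f - z <= r by apply/andP; split; lra.
  move=> /andP[a1 a2] /andP[b1 b2]; nra.
Qed.

Lemma ln2_gt0 : 0 < ln (2 : R).
Proof. by apply: ln_gt0; lra. Qed.

Lemma ln2_le1 : ln (2 : R) <= 1.
Proof.
rewrite -[X in _ <= X](expRK 1) ler_ln ?posrE ?expR_gt0 //.
by have := expR_ge1Dx (1 : R); lra.
Qed.

Lemma ln3_le : ln (3 : R) <= 2 * ln 2.
Proof.
have -> : 2 * ln (2:R) = ln 4.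
  have -> : (4 : R) = 2 * 2 by lra.
  by rewrite lnM ?posrE //; lra.
by rewrite ler_ln ?posrE //; lra.
Qed.

Lemma log2E x : ln x = ln 2 * log2 x.
Proof. by rewrite /log2 mulrC divfK // gt_eqF //; exact: ln2_gt0. Qed.

Lemma log2_ge0 x : 1 <= x -> 0 <= log2 x.
Proof. by move=> h; rewrite /log2 divr_ge0 ?ln_ge0 // ltW //; lra. Qed.

Lemma log2_ge1 x : 2 <= x -> 1 <= log2 x.
Proof.
move=> h; rewrite /log2 ler_pdivlMr ?ln2_gt0 // mul1r ler_ln ?posrE //; lra.
Qed.

Lemma pow2_le_log (n : nat) (P : R) : 0 < P -> ((2 ^ n)%N%:R <= P) -> n%:R <= log2 P.
Proof.
move=> P0 h; rewrite /log2 ler_pdivlMr ?ln2_gt0 //.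
have h2 : 0 < ((2 ^ n)%N%:R : R) by rewrite ltr0n expn_gt0.
have := h; rewrite -ler_ln ?posrE // natrX lnXn //; last by lra.
Qed.

Lemma ln_nat_bound (j : nat) (P : R) : 1 <= P -> j%:R <= P ->
  ln ((j.+1 * j.+2)%N%:R : R) <= 4 + 2 * log2 P.
Proof.
move=> P1 hj.
have hP : ln (3 * P) <= 2 + log2 P.
  rewrite lnM ?posrE; [|lra|lra].
  have := ln3_le; have := ln2_le1; have := @log2_ge0 P P1; rewrite (log2E P).
  have := ln2_gt0; nra.
have hj0 : (0 : R) <= j%:R by rewrite ler0n.
rewrite natrM lnM ?posrE ?ltr0n //.
have e1 : ((j.+1)%:R : R) = j%:R + 1 by rewrite -addn1 natrD.
have e2 : ((j.+2)%:R : R) = j%:R + 2 by rewrite -addn2 natrD.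
have l1 : ln ((j.+1)%:R : R) <= ln (3 * P).
  rewrite ler_ln ?posrE ?ltr0n //; last lra.
  rewrite e1; lra.
have l2 : ln ((j.+2)%:R : R) <= ln (3 * P).
  rewrite ler_ln ?posrE ?ltr0n //; last lra.
  rewrite e2; lra.
lra.
Qed.

Lemma W_bound (j W : nat) (P : R) : 1 <= P -> j%:R <= P ->
  (W = 0%N \/ (2 ^ W.-1 <= j)%N) -> W%:R <= 1 + log2 P.
Proof.
move=> P1 hj [->|hW]; first by have := @log2_ge0 P P1; lra.
case: W hW => [|W] hW; first by have := @log2_ge0 P P1; lra.
have : W%:R <= log2 P.
  apply: pow2_le_log; first lra.
  by apply: le_trans hj; rewrite ler_nat.
by rewrite -addn1 natrD; lra.
Qed.

Lemma min_ex (P : nat -> Prop) : (exists n, P n) -> exists n, P n /\ forall m, P m -> (n <= m)%N.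
Proof.
move=> [n0 Pn0].
have ex : exists n, `[< P n >] by exists n0; exact/asboolP.
case: (ex_minnP ex) => n /asboolP Pn hmin; exists n; split => // m Pm.
by apply: hmin; exact/asboolP.
Qed.

Lemma inf_nat (T : set nat) n : T n -> (forall m, T m -> (n <= m)%N) ->
  inf [set (m%:R : R) | m in T] = n%:R.
Proof.
move=> Tn hmin; apply/le_anti/andP; split.
  apply: ge_inf; last by exists n.
  by exists 0 => _ [m _ <-]; rewrite ler0n.
apply: lb_le_inf; first by exists n%:R, n.
by move=> _ [m Tm <-]; rewrite ler_nat hmin.
Qed.

Lemma net_mono (X : Type) (A : set (X -> R)) (e1 e2 : R) n :
  e1 <= e2 -> net_sizes e1 A n -> net_sizes e2 A n.
Proof.
move=> le [g [h1 h2]]; exists g; split => // f Af.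
have [i [hi hx]] := h2 f Af; exists i; split => // x; exact: le_trans (hx x) le.
Qed.

Lemma pow2_ge (x : R) : exists n : nat, x <= (2 ^ n)%N%:R.
Proof.
exists (Num.Def.trunc x).+1; apply: (le_trans (ltW (truncnS_gt x))).
by rewrite ler_nat ltnW // ltn_expl.
Qed.

Lemma minW (j : nat) : exists W, (j < 2 ^ W)%N /\ (W = 0%N \/ (2 ^ W.-1 <= j)%N).
Proof.
have [W [hW hmin]] := @min_ex (fun W => (j < 2 ^ W)%N) (ex_intro _ j (ltn_expl j (isT : (1 < 2)%N))).
exists W; split => //; case: W hW hmin => [|W] hW hmin; [by left | right].
by rewrite leqNgt /=; apply/negP => /hmin; rewrite ltnn.
Qed.

Theorem theorem3 : exists C : R,
  forall (X : topologicalType) (x0 : X) (Fs : set (X -> R)) (nF : (X -> R) -> R),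
  banach_compact_emb Fs nF ->
  exists S : strategy X,
    (forall (x : nat -> X) (y : nat -> R),
       (forall n, -1 <= y n <= 1) ->
       forall n : nat, (1 <= n)%N -> `|pred_at S x y n| <= 1) /\
    (forall (x : nat -> X) (y : nat -> R),
       (forall n, -1 <= y n <= 1) ->
       forall (N : nat), (1 <= N)%N ->
       forall F : X -> R, Fs F ->
       let phi := 2 * Num.max 1 (nF F) in
       \sum_(1 <= n < N.+1) (y n - pred_at S x y n) ^+ 2
       <= \sum_(1 <= n < N.+1) (y n - F (x n)) ^+ 2
          + C * inf [set entropy (eps / phi) [set f | Fs f /\ nF f <= 1]
                         + log2 (log2 (1 / eps)) + log2 (log2 phi)
                         + eps * N%:R + 1
                    | eps in [set e : R | 0 < e <= 1 / 2]]).
Proof.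
exists 1000 => X x0 Fs nF [hb [h0 [hadd hscal]] [hn0 [hnscal htri]] hcomp hcpt].
pose A := [set f : X -> R | Fs f /\ nF f <= 1].
have nets : forall e : R, 0 < e -> exists n, net_sizes e A n.
  by move=> e e0; exact: net_exists.
pose dl (s : nat) : R := ((2 ^ s)%N%:R)^-1.
have dl0 : forall s, 0 < dl s by move=> s; rewrite /dl invr_gt0 ltr0n expn_gt0.
have hch : forall s, exists ng : nat * (nat -> X -> R),
    [/\ forall i, (i < ng.1)%N -> A (ng.2 i),
        forall f, A f -> exists i, (i < ng.1)%N /\ forall x, `|f x - ng.2 i x| <= dl s
      & forall m, net_sizes (dl s) A m -> (ng.1 <= m)%N].
  move=> s; have [n [[g [g1 g2]] hmin]] := @min_ex _ (nets _ (dl0 s)).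
  by exists (n, g); split.
case: (choice hch) => ch hch'.
pose nsz' s := (ch s).1; pose g s := (ch s).2.
pose nsz j k := nsz' (j + k)%N.
pose pe j k i x := clip ((2 ^ j)%N%:R * g (j + k)%N i x).
have pe_bd : forall j k i x, `|pe j k i x| <= 1 by move=> *; exact: clip_bd.
exists (strat X x0 nsz pe); split.
  move=> x y hy n hn; rewrite pred_atE //; exact: (mu_bd _ _ _ _ _ pe_bd).
move=> x y hy N hN F hF; cbv zeta; set phi := 2 * Num.max 1 (nF F).
have eL : \sum_(1 <= n < N.+1) (y n - pred_at (strat X x0 nsz pe) x y n) ^+ 2
          = Lstar X nsz pe x y N.+1.
  by apply: eq_big_nat => n /andP[n1 _]; rewrite pred_atE.
rewrite eL.
set LF := \sum_(1 <= n < N.+1) (y n - F (x n)) ^+ 2.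
set L := Lstar X nsz pe x y N.+1.
match goal with |- is_true (_ <= _ + _ * inf ?S) => set SV := S end.
suff key : forall eps : R, 0 < eps <= 1 / 2 ->
   L - LF <= 1000 * (entropy (eps / phi) A + log2 (log2 (1 / eps)) + log2 (log2 phi)
                         + eps * N%:R + 1).
  have : (L - LF) / 1000 <= inf SV.
    apply: lb_le_inf.
      by exists (entropy ((1/2) / phi) A + log2 (log2 (1 / (1/2)))
                  + log2 (log2 phi) + (1/2) * N%:R + 1), (1/2) => //; rewrite /= ; lra.
    move=> _ [eps heps <-]; rewrite ler_pdivrMr; last lra.
    by rewrite mulrC; exact: key.
  lra.
move=> eps /andP[e0 e1].
set mm := Num.max 1 (nF F).
have m1 : 1 <= mm by rewrite le_max lexx.
have nFm : nF F <= mm by rewrite le_max lexx orbT.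
have phi2 : 2 <= phi by rewrite /phi -/mm; lra.
have [j [hj hjmin]] := @min_ex (fun j => mm <= (2 ^ j)%N%:R) (pow2_ge mm).
have hjphi : (2 ^ j)%N%:R <= phi.
  case: j hj hjmin => [|j] hj hjmin; first by rewrite /phi -/mm; lra.
  have : ~ (mm <= (2 ^ j)%N%:R) by move=> /hjmin; rewrite ltnn.
  move=> /negP; rewrite -ltNge => hlt.
  by rewrite expnS natrM /phi -/mm; lra.
have exk : exists k, 1 < (2 ^ k)%N%:R * eps.
  have [n hn] := pow2_ge (eps^-1 + 1); exists n.
  by rewrite -ltr_pdivrMr // div1r; lra.
have [k' [hk' hk'min]] := @min_ex (fun k => 1 < (2 ^ k)%N%:R * eps) exk.
have k'1 : (1 <= k')%N.
  by case: k' hk' {hk'min} => // hk'; rewrite expn0 mul1r in hk'; lra.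
set k := k'.-1.
have hk1 : (2 ^ k)%N%:R * eps <= 1.
  rewrite leNgt; apply/negP => /hk'min; rewrite /k.
  by case: k' k'1 {hk' hk'min k} => // k' _; rewrite ltnn.
have hk2 : 1 < 2 * ((2 ^ k)%N%:R * eps).
  by move: hk'; rewrite /k; case: k' k'1 {hk'min k hk1} => // k' _; rewrite expnS natrM mulrA.
have [Wj [hWj hWjmin]] := minW j.
have [Wk [hWk hWkmin]] := minW k.
set W := (Wj + Wk)%N.
have hjW : (j < 2 ^ W)%N.
  by apply: (leq_trans hWj); rewrite leq_exp2l // leq_addr.
have hkW : (k < 2 ^ W)%N.
  by apply: (leq_trans hWk); rewrite leq_exp2l // leq_addl.
have p2j : 0 < ((2 ^ j)%N%:R : R) by rewrite ltr0n expn_gt0.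
have p2k : 0 < ((2 ^ k)%N%:R : R) by rewrite ltr0n expn_gt0.
pose G := fun z => ((2 ^ j)%N%:R)^-1 * F z.
have AG : A G.
  split; first exact: hscal.
  rewrite hnscal // ger0_norm; last by rewrite invr_ge0 ler0n.
  rewrite mulrC ler_pdivrMr // mul1r; exact: le_trans nFm hj.
have [_ hcov hmin] := hch' (j + k)%N.
have [i [hi hGi]] := hcov G AG.
set r : R := ((2 ^ k)%N%:R)^-1.
have happ : forall z, `|(2 ^ j)%N%:R * g (j + k)%N i z - F z| <= r.
  move=> z.
  have e : (2 ^ j)%N%:R * g (j + k)%N i z - F z = - ((2 ^ j)%N%:R * (G z - g (j + k)%N i z)).
    by rewrite /G; field; rewrite gt_eqF.
  rewrite e normrN normrM ger0_norm; last exact: ltW.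
  have -> : r = (2 ^ j)%N%:R * dl (j + k)%N.
    by rewrite /r /dl expnD natrM; field; rewrite !gt_eqF.
  by apply: ler_wpM2l; [exact: ltW | exact: hGi].
have hloss : \sum_(1 <= s < N.+1) (y s - pe j k i (x s)) ^+ 2 <= LF + 4 * (r * N%:R).
  apply: (@le_trans _ _ (\sum_(1 <= s < N.+1) ((y s - F (x s)) ^+ 2 + 4 * r))).
    by apply: ler_sum => s _; apply: clip_loss => //; exact: happ.
  rewrite big_split /= sumr_const_nat subSS subn0 -/LF.
  have eN : forall a : R, a *+ N = a * N%:R by move=> a; rewrite mulr_natr.
  by rewrite eN mulrA.
have hreg := @regret X nsz pe x y pe_bd hy N j k i W hi hjW hkW.
rewrite -/L in hreg.
have phi0 : 0 < phi by lra.
have [ns [hns hnsmin]] := @min_ex _ (nets _ (divr_gt0 e0 phi0)).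
have hent : entropy (eps / phi) A = log2 ns%:R by rewrite /entropy (@inf_nat _ _ hns hnsmin).
have hle_dl : eps / phi <= dl (j + k)%N.
  rewrite /dl expnD natrM ler_pdivrMr //.
  rewrite mulrC ler_pdivlMr; last by rewrite mulr_gt0.
  have := ler_wpM2l (ltW p2j) hk1; rewrite mulr1 => h.
  apply: le_trans hjphi; apply: le_trans h.
  by rewrite le_eqVlt; apply/orP; left; apply/eqP; ring.
have hsub : (nsz' (j + k)%N <= ns)%N.
  by apply: hmin; exact: net_mono hle_dl hns.
have nsz1 : (0 < nsz' (j + k)%N)%N by apply: leq_ltn_trans (leq0n i) hi.
have ns1 : (0 < ns)%N by apply: leq_trans nsz1 hsub.
have hjP : j%:R <= log2 phi := @pow2_le_log _ _ phi0 hjphi.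
have P1 : 1 <= log2 phi := @log2_ge1 _ phi2.
have ie0 : 0 < 1 / eps by rewrite divr_gt0.
have hkP : k%:R <= log2 (1 / eps).
  by apply: pow2_le_log => //; rewrite ler_pdivlMr.
have K1 : 1 <= log2 (1 / eps).
  by apply: log2_ge1; rewrite ler_pdivlMr //; lra.
have lnj := @ln_nat_bound _ _ P1 hjP.
have lnk := @ln_nat_bound _ _ K1 hkP.
have Wjb := @W_bound _ _ _ P1 hjP hWjmin.
have Wkb := @W_bound _ _ _ K1 hkP hWkmin.
have hWr : (W%:R : R) = Wj%:R + Wk%:R by rewrite /W natrD.
have H0 : 0 <= entropy (eps / phi) A by rewrite hent; apply: log2_ge0; rewrite ler1n.
have A0 : 0 <= log2 (log2 (1 / eps)) := @log2_ge0 _ K1.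
have B0 : 0 <= log2 (log2 phi) := @log2_ge0 _ P1.
have hnsl : ln ((nsz' (j + k)%N)%:R : R) <= entropy (eps / phi) A.
  have h1 : ln ((nsz' (j + k)%N)%:R : R) <= ln (ns%:R).
    by rewrite ler_ln ?posrE ?ltr0n // ler_nat.
  apply: (le_trans h1); rewrite log2E hent.
  have := ln2_le1; have := ln2_gt0; have : 0 <= log2 (ns%:R : R) by apply: log2_ge0; rewrite ler1n.
  nra.
have lnQ : ln ((nsz j k * ((j.+1 * j.+2) * (k.+1 * k.+2)))%N%:R : R) <=
    entropy (eps / phi) A + (4 + 2 * log2 (log2 phi)) + (4 + 2 * log2 (log2 (1 / eps))).
  have q1 : (0 < j.+1 * j.+2)%N by rewrite muln_gt0.
  have q2 : (0 < k.+1 * k.+2)%N by rewrite muln_gt0.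
  have pQ1 : (0 : R) < (nsz j k)%:R by rewrite ltr0n; exact: nsz1.
  have pQ2 : (0 : R) < ((j.+1 * j.+2) * (k.+1 * k.+2))%N%:R by rewrite ltr0n muln_gt0 q1 q2.
  have pQ3 : (0 : R) < (j.+1 * j.+2)%N%:R by rewrite ltr0n.
  have pQ4 : (0 : R) < (k.+1 * k.+2)%N%:R by rewrite ltr0n.
  rewrite natrM lnM ?posrE //.
  rewrite natrM lnM ?posrE //.
  rewrite /nsz; lra.
have hr : r <= 2 * eps.
  have ra : r * (2 ^ k)%N%:R = 1 by rewrite /r mulVf // gt_eqF.
  have r0 : 0 < r by rewrite /r invr_gt0.
  nra.
have N0 : (0 : R) <= N%:R by rewrite ler0n.
have hrN : r * N%:R <= 2 * (eps * N%:R).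
  by rewrite mulrA; apply: ler_wpM2r.
have eN0 : 0 <= eps * N%:R by rewrite mulr_ge0 // ltW.
lra.
Qed.
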